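(* Let $K$ be a field, let $\mathcal R\subset\mathbb Z^k$ be a polyhedral region, and let $f$ be a hypergeometric term on $\mathcal R$. Then the function $g\colon\mathbb Z^k\to K$ defined by $g(\vec z)=f(\vec z)$ for $\vec z\in\mathcal R$ and $g(\vec z)=0$ for $\vec z\notin\mathcal R$ is a hypergeometric term on $\mathbb Z^k$.
   Context: A half-space is $\{\vec z\in\mathbb Z^k:\vec v\cdot\vec z>n\}$ with $\vec v\in\mathbb Z^k$, $n\in\mathbb Z$; a polyhedral region is $\mathbb Z^k$ or an intersection of finitely many half-spaces. A hypergeometric term on a polyhedral region $\mathcal R$ over $K$ is a function $f\colon\mathcal R\to K$ such that for each $i\in\{1,\dots,k\}$ there are nonzero polynomials $A_i,B_i\in K[z_1,\dots,z_k]$ with $A_i(\vec z)f(\vec z)=B_i(\vec z)f(\vec z+\vec e_i)$ for all $\vec z$ with $\vec z\in\mathcal R$ and $\vec z+\vec e_i\in\mathcal R$. A hypergeometric term on $\mathbb Z^k$ is the case $\mathcal R=\mathbb Z^k$. *)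

(* Defs.v *)
From HB Require Import structures.
From mathcomp Require Import all_boot all_order all_algebra.
From mathcomp Require Import mpoly.
Set Implicit Arguments. Unset Strict Implicit. Unset Printing Implicit Defensive.
Import Order.TTheory GRing.Theory Num.Theory.
Local Open Scope ring_scope.

Definition pt (k : nat) := 'I_k -> int.

Definition dotZ (k : nat) (v z : pt k) : int := \sum_(i < k) v i * z i.

Definition shiftZ (k : nat) (z : pt k) (i : 'I_k) : pt k :=
  fun j => z j + (j == i)%:Z.

Definition halfspace (k : nat) (v : pt k) (n : int) : pred (pt k) :=
  fun z => n < dotZ v z.

(* A polyhedral region is given by a finite list of half-spaces (v, n);
   the region is their intersection (the empty list gives all of Z^k). *)
Definition region (k : nat) (H : seq (pt k * int)) : pred (pt k) :=
  fun z => all (fun h => halfspace h.1 h.2 z) H.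

Definition evalZ (K : fieldType) (k : nat) (p : {mpoly K[k]}) (z : pt k) : K :=
  p.@[fun j => (z j)%:~R].

Definition hypergeometric_on (K : fieldType) (k : nat) (Rg : pred (pt k))
    (f : pt k -> K) : Prop :=
  forall i : 'I_k, exists A B : {mpoly K[k]}, A != 0 /\ B != 0 /\
    forall z : pt k, Rg z -> Rg (shiftZ z i) ->
      evalZ A z * f z = evalZ B z * f (shiftZ z i).

(* Main.v *)
Require Import Defs.
From HB Require Import structures.
From mathcomp Require Import all_boot all_order all_algebra.
From mathcomp Require Import mpoly zify.
From Stdlib Require Import Classical.
Import Order.TTheory GRing.Theory Num.Theory.
Local Open Scope ring_scope.

Section Aux.
Variables (K : fieldType) (k : nat).

Lemma evalZM (p q : {mpoly K[k]}) z : evalZ (p * q) z = evalZ p z * evalZ q z.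
Proof. by rewrite /evalZ mevalM. Qed.

Lemma nzXc (i : 'I_k) (c : K) : 'X_i - c%:MP != 0 :> {mpoly K[k]}.
Proof.
apply/negP => /eqP H0; have := congr1 (meval (fun _ => c + 1)) H0.
by rewrite mevalB mevalXU mevalC meval0 addrAC subrr add0r => /eqP; rewrite oner_eq0.
Qed.

Definition Lin (v : pt k) : {mpoly K[k]} := \sum_(j < k) (v j)%:~R *: 'X_j.

Lemma meval_Lin (v : pt k) x : (Lin v).@[x] = \sum_(j < k) (v j)%:~R * x j.
Proof.
rewrite /Lin rmorph_sum; apply: eq_bigr => j _ /=; by rewrite mevalZ mevalXU.
Qed.

Lemma evalZ_Lin (v : pt k) z : evalZ (Lin v) z = (dotZ v z)%:~R.
Proof.
rewrite /evalZ meval_Lin /dotZ (rmorph_sum (intr : int -> K)); apply: eq_bigr => j _ /=; by rewrite intrM.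
Qed.

Lemma dot_shift (v : pt k) z i : dotZ v (shiftZ z i) = dotZ v z + v i.
Proof.
rewrite /dotZ /shiftZ; under eq_bigr do rewrite mulrDr; rewrite big_split /=; congr +%R.
rewrite (bigD1 i) //= eqxx mulr1 big1 ?addr0 // => j /negbTE ->; by rewrite mulr0.
Qed.

Lemma nzLin (v : pt k) i (c : K) : (v i)%:~R != 0 :> K -> Lin v - c%:MP != 0.
Proof.
move=> vi; apply/negP => /eqP H0.
pose x := fun j : 'I_k => if j == i then (c + 1) / (v i)%:~R else 0.
have := congr1 (meval x) H0; rewrite mevalB meval_Lin mevalC meval0.
rewrite (bigD1 i) //= big1 ?addr0; last first.
  by move=> j /negbTE; rewrite /x => ->; rewrite mulr0.
rewrite /x eqxx mulrC mulfVK // addrAC subrr add0r => /eqP; by rewrite oner_eq0.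
Qed.

Definition Zq (i : 'I_k) (q : nat) : {mpoly K[k]} :=
  \prod_(t < q) ('X_i - (t%:R : K)%:MP).

Lemma Zq_nz i q : Zq i q != 0.
Proof. apply/prodf_neq0 => t _; exact: nzXc. Qed.

Lemma Zq_eval i q z : (0 < q)%N -> (q%:R : K) = 0 -> evalZ (Zq i q) z = 0.
Proof.
move=> q0 hq; rewrite /evalZ /Zq rmorph_prod /=; apply/eqP.
rewrite prodf_seq_eq0; apply/hasP.
have qz : (q%:Z != 0) by lia.
have hlt : (absz (z i %% q)%Z < q)%N.
  have := @ltz_pmod (z i) q; rewrite ltz_nat q0 => /(_ isT) h.
  by have := modz_ge0 (z i) qz; lia.
exists (Ordinal hlt); first by rewrite mem_index_enum.
rewrite /= mevalB mevalXU mevalC.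
have -> : ((absz (z i %% q)%Z)%:R : K) = ((z i %% q)%Z)%:~R.
  by rewrite -[X in _ = X%:~R](gez0_abs (modz_ge0 (z i) qz)).
rewrite -intrB {1}(divz_eq (z i) q) addrK intrM.
by rewrite -[(q%:Z)%:~R]/(q%:R) hq mulr0.
Qed.

End Aux.
Arguments Zq {K k}. Arguments Zq_nz {K k}. Arguments Zq_eval {K k}. Arguments Lin {K k}.
Arguments nzLin {K k}. Arguments evalZ_Lin {K k}. Arguments dot_shift {k}. Arguments evalZM {K k}.

Theorem mainTheorem16 (K : fieldType) (k : nat) (H : seq (pt k * int))
    (f : pt k -> K) :
  hypergeometric_on (region H) f ->
  hypergeometric_on (fun _ => true)
    (fun z => if region H z then f z else 0).
Proof.
move=> hf i; case: (hf i) => A [B [A0 [B0 hAB]]].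
case: (classic (exists q, (0 < q)%N /\ (q%:R : K) = 0)) => [[q [q0 hq]]|nochar].
  exists (Zq i q), (Zq i q); split; first exact: Zq_nz.
  split; first exact: Zq_nz.
  by move=> z _ _; rewrite !Zq_eval // !mul0r.
have hint : forall c : int, c != 0 -> (c%:~R : K) != 0.
  case=> [n|n] hc.
    apply/negP => /eqP h; apply: nochar; exists n; split => //.
    by rewrite lt0n; apply: contra hc => /eqP ->.
  rewrite NegzE mulrNz oppr_eq0; apply/negP => /eqP h.
  by apply: nochar; exists n.+1.
pose P : {mpoly K[k]} := \prod_(h <- H) \prod_(t < 2 * absz (h.1 i))
   (Lin h.1 - ((h.2 - (absz (h.1 i))%:Z + 1 + t%:Z)%:~R)%:MP).
have Pnz : P != 0.
  rewrite /P prodf_seq_neq0; elim: (H) => //= h t ->; rewrite andbT.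
  apply/prodf_neq0 => u _.
  apply: (nzLin _ i); apply: hint; have := ltn_ord u; lia.
have Pz : forall z (Q : pred (pt k * int)), (forall h, Q h -> exists t : nat,
    (t < 2 * absz (h.1 i))%N /\ dotZ h.1 z = h.2 - (absz (h.1 i))%:Z + 1 + t%:Z) ->
    has Q H -> evalZ P z = 0.
  move=> z Q hQ hh; rewrite /evalZ /P rmorph_prod /=; apply/eqP.
  rewrite prodf_seq_eq0; apply: sub_has hh => h /hQ [t [ht hd]] /=.
  rewrite rmorph_prod /=; rewrite prodf_seq_eq0; apply/hasP.
  exists (Ordinal ht); first by rewrite mem_index_enum.
  by rewrite /= mevalB mevalC -/(evalZ _ z) evalZ_Lin hd subrr.
have hasD : forall (a b : pred (pt k * int)) (s : seq (pt k * int)),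
    all b s -> ~~ all a s -> has (fun h => b h && ~~ a h) s.
  move=> a b; elim=> //= h s IH /andP [bh bs]; rewrite negb_and => /orP [nh|ns].
    by rewrite bh nh.
  by rewrite IH ?orbT.
exists (A * P), (B * P); split; first by rewrite mulf_neq0.
split; first by rewrite mulf_neq0.
move=> z _ _ /=; rewrite !evalZM.
case Rz: (region H z); case Rz': (region H (shiftZ z i)).
- by rewrite mulrAC hAB // mulrAC.
- rewrite mulr0 (Pz z (fun h => halfspace h.1 h.2 z && ~~ halfspace h.1 h.2 (shiftZ z i))) ?mulr0 ?mul0r //; last first.
    apply: (hasD (fun h => halfspace h.1 h.2 (shiftZ z i)) (fun h => halfspace h.1 h.2 z)); [exact: Rz | by move: Rz'; rewrite /region => ->].
  move=> h /andP []; rewrite /halfspace dot_shift.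
  move: (dotZ h.1 z) (h.2) (h.1 i) => d n x h1 h2.
  exists (absz (d - n - 1 + (absz x)%:Z)); lia.
- rewrite mulr0 (Pz z (fun h => halfspace h.1 h.2 (shiftZ z i) && ~~ halfspace h.1 h.2 z)) ?mulr0 ?mul0r //; last first.
    apply: (hasD (fun h => halfspace h.1 h.2 z) (fun h => halfspace h.1 h.2 (shiftZ z i))); [exact: Rz' | by move: Rz; rewrite /region => ->].
  move=> h /andP []; rewrite /halfspace dot_shift.
  move: (dotZ h.1 z) (h.2) (h.1 i) => d n x h1 h2.
  exists (absz (d - n - 1 + (absz x)%:Z)); lia.
- by rewrite !mulr0.
Qed.
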